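(* There exists a ring satisfying (NK) if and only if there exists a countably generated $F$-algebra satisfying (NK), where $F=\mathbb Q$ or $F=\mathbb Z_p$ for some prime number $p$. Equivalently, Köthe's Conjecture holds if and only if there is no countably generated $F$-algebra satisfying (NK) with $F=\mathbb Q$ or $F=\mathbb Z_p$, $p$ prime.
   Context: All rings are associative with unit. A right ideal is nil if all its elements are nilpotent. A ring satisfies the condition (NK) if it contains two nil right ideals whose sum is not nil. Köthe's Conjecture (every ring with no non-zero nil two-sided ideal has no non-zero nil one-sided ideal) is known to be equivalent to the statement that no ring satisfies (NK). *)

(* Defs.v *)
From HB Require Import structures.
From mathcomp Require Import all_boot all_order all_algebra.
Set Implicit Arguments. Unset Strict Implicit. Unset Printing Implicit Defensive.
Import GRing.Theory.
Local Open Scope ring_scope.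

Definition right_ideal (R : pzRingType) (I : R -> Prop) : Prop :=
  [/\ I 0,
      (forall x y, I x -> I y -> I (x - y)) &
      (forall x r, I x -> I (x * r))].

Definition nilpotent_elt (R : pzRingType) (x : R) : Prop :=
  exists n : nat, x ^+ n = 0.

Definition nil_set (R : pzRingType) (I : R -> Prop) : Prop :=
  forall x, I x -> nilpotent_elt x.

Definition NK (R : pzRingType) : Prop :=
  exists I J : R -> Prop,
    [/\ right_ideal I, right_ideal J, nil_set I, nil_set J &
        ~ nil_set (fun z => exists x y, [/\ I x, J y & z = x + y])].

Definition alg_generated_by (F : pzRingType) (A : algType F) (g : nat -> A) : Prop :=
  forall P : A -> Prop,
    P 1 ->
    (forall x y, P x -> P y -> P (x + y)) ->
    (forall (k : F) x, P x -> P (k *: x)) ->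
    (forall x y, P x -> P y -> P (x * y)) ->
    (forall n, P (g n)) ->
    forall x, P x.

Definition countably_generated (F : pzRingType) (A : algType F) : Prop :=
  exists g : nat -> A, alg_generated_by g.

(* Main.v *)
Require Import Defs.
From HB Require Import structures.
From mathcomp Require Import all_boot all_order all_algebra.
From mathcomp Require Import ring.
From Stdlib Require Import ClassicalEpsilon FunctionalExtensionality PropExtensionality ProofIrrelevance Classical.
Set Implicit Arguments. Unset Strict Implicit. Unset Printing Implicit Defensive.
Import GRing.Theory.
Local Open Scope ring_scope.

Definition pb (P : Prop) : bool := if excluded_middle_informative P then true else false.
Lemma pbP (P : Prop) : reflect P (pb P).
Proof. rewrite /pb; case: excluded_middle_informative => h; constructor => //. Qed.

Section SubAlg.
Variables (F : pzRingType) (B : algType F) (a b : B).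
Definition gen (v : B) : Prop := forall P : B -> Prop,
    P 1 -> (forall x y, P x -> P y -> P (x + y)) ->
    (forall (k : F) x, P x -> P (k *: x)) ->
    (forall x y, P x -> P y -> P (x * y)) -> P a -> P b -> P v.
Definition genb : {pred B} := fun v => pb (gen v).
Lemma genbP v : reflect (gen v) (v \in genb).
Proof. exact: pbP. Qed.
Lemma gen_closed : GRing.subsemialg_closed genb.
Proof.
split.
- by apply/genbP => P.
- split.
  + by apply/genbP => P P1 PD PZ PM _ _; rewrite -(scale0r 1); apply: PZ.
  + move=> x y /genbP hx /genbP hy; apply/genbP => P P1 PD PZ PM Pa Pb.
    apply: (PD); [apply: hx | apply: hy] => //.
- move=> k w /genbP hx; apply/genbP => P P1 PD PZ PM Pa Pb.
  by apply: (PZ); apply: hx.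
- move=> x y /genbP hx /genbP hy; apply/genbP => P P1 PD PZ PM Pa Pb.
  by apply: (PM); [apply: hx | apply: hy].
Qed.
HB.instance Definition _ := GRing.isSubalgClosed.Build F B genb gen_closed.
Record SA := MkSA {sa_val : B; _ : sa_val \in genb}.
HB.instance Definition _ := [isSub for sa_val].
HB.instance Definition _ := [Choice of SA by <:].
HB.instance Definition _ := [SubChoice_isSubAlgebra of SA by <:].
End SubAlg.
Section SubNK.
Variables (F : pzRingType) (B : algType F) (I J : B -> Prop) (x y : B).
Hypotheses (hI : right_ideal I) (hJ : right_ideal J) (nI : nil_set I) (nJ : nil_set J)
  (Ix : I x) (Jy : J y) (nz : ~ nilpotent_elt (x + y)).

Lemma genx : x \in genb x y. Proof. by apply/genbP => P. Qed.
Lemma geny : y \in genb x y. Proof. by apply/genbP => P. Qed.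

Lemma SA_cg : countably_generated (SA x y).
Proof.
exists (fun n => if n is 0 then MkSA genx else MkSA geny).
move=> P P1 PD PZ PM Pg s.
case: s => v hv.
have := genbP _ _ v hv.
move=> /(_ (fun v => exists h : v \in genb x y, P (MkSA h))) H.
have [h' Ph'] : exists h : v \in genb x y, P (MkSA h).
  apply: H.
  - have h1 : 1 \in genb x y by apply: GRing.rpred1.
    by exists h1; have -> : MkSA h1 = 1 by apply: val_inj.
  - move=> u w [hu Pu] [hw Pw].
    have hs : u + w \in genb x y by rewrite GRing.rpredD.
    exists hs; have -> : MkSA hs = MkSA hu + MkSA hw by apply: val_inj.
    exact: PD.
  - move=> k u [hu Pu].
    have hs : k *: u \in genb x y by rewrite GRing.rpredZ.
    exists hs; have -> : MkSA hs = k *: MkSA hu by apply: val_inj.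
    exact: PZ.
  - move=> u w [hu Pu] [hw Pw].
    have hs : u * w \in genb x y by rewrite GRing.rpredM.
    exists hs; have -> : MkSA hs = MkSA hu * MkSA hw by apply: val_inj.
    exact: PM.
  - by exists genx; apply: (Pg 0%N).
  - by exists geny; apply: (Pg 1%N).
by rewrite (bool_irrelevance hv h').
Qed.

Lemma SA_NK : NK (SA x y).
Proof.
have rid : forall K : B -> Prop, right_ideal K -> right_ideal (fun s : SA x y => K (val s)).
  move=> K [K0 KB KM]; split.
  - by rewrite raddf0.
  - by move=> u w hu hw; rewrite raddfB; apply: KB.
  - by move=> u w hu; rewrite rmorphM; apply: KM.
have nil : forall K : B -> Prop, nil_set K -> nil_set (fun s : SA x y => K (val s)).
  move=> K nK s /nK [n hn]; exists n; apply: val_inj; by rewrite rmorphXn raddf0.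
exists (fun s => I (val s)), (fun s => J (val s)); split; auto.
move=> h.
have := h (MkSA genx + MkSA geny).
case.
  by exists (MkSA genx), (MkSA geny).
move=> n hn; apply: nz; exists n.
have := congr1 val hn; by rewrite rmorphXn raddf0 raddfD.
Qed.
End SubNK.

Record QData (F : pzRingType) (T : choiceType) := {
  qr : T -> T -> Prop;
  qz : T; qo : T; qad : T -> T -> T; qop : T -> T; qmu : T -> T -> T; qsc : F -> T -> T;
  qrefl : forall x, qr x x;
  qsym : forall x y, qr x y -> qr y x;
  qtrans : forall x y w, qr x y -> qr y w -> qr x w;
  qad_c : forall x x' y y', qr x x' -> qr y y' -> qr (qad x y) (qad x' y');
  qop_c : forall x x', qr x x' -> qr (qop x) (qop x');
  qmu_c : forall x x' y y', qr x x' -> qr y y' -> qr (qmu x y) (qmu x' y');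
  qsc_c : forall k x x', qr x x' -> qr (qsc k x) (qsc k x');
  qaddA : forall x y w, qr (qad x (qad y w)) (qad (qad x y) w);
  qaddC : forall x y, qr (qad x y) (qad y x);
  qadd0 : forall x, qr (qad qz x) x;
  qaddN : forall x, qr (qad (qop x) x) qz;
  qmulA : forall x y w, qr (qmu x (qmu y w)) (qmu (qmu x y) w);
  qmul1L : forall x, qr (qmu qo x) x;
  qmul1R : forall x, qr (qmu x qo) x;
  qmulDl : forall x y w, qr (qmu (qad x y) w) (qad (qmu x w) (qmu y w));
  qmulDr : forall x y w, qr (qmu w (qad x y)) (qad (qmu w x) (qmu w y));
  qone_nz : ~ qr qo qz;
  qscA : forall a b v, qr (qsc a (qsc b v)) (qsc (a * b) v);
  qsc1 : forall v, qr (qsc 1 v) v;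
  qscDr : forall a u v, qr (qsc a (qad u v)) (qad (qsc a u) (qsc a v));
  qscDl : forall a b v, qr (qsc (a + b) v) (qad (qsc a v) (qsc b v));
  qscAl : forall a u v, qr (qsc a (qmu u v)) (qmu (qsc a u) v);
  qscAr : forall a u v, qr (qsc a (qmu u v)) (qmu u (qsc a v))
}.

Section Quot.
Variables (F : pzRingType) (T : choiceType) (D : QData F T).
Local Notation r := (qr D).
Definition canon (x : T) : T := epsilon (inhabits x) (r x).
Lemma canon_r x : r x (canon x).
Proof. exact: (epsilon_spec (inhabits x) (r x) (ex_intro _ x (qrefl D x))). Qed.
Lemma canon_eq x y : r x y -> canon x = canon y.
Proof.
move=> h; rewrite /canon.
have e : r x = r y.
  apply: functional_extensionality => w; apply: propositional_extensionality; split.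
  - by move=> h'; apply: qtrans (qsym h) h'.
  - by move=> h'; apply: qtrans h h'.
move: (inhabits x) (inhabits y); rewrite e => i1 i2.
by rewrite (proof_irrelevance _ i1 i2).
Qed.
Lemma canonK x : canon (canon x) = canon x.
Proof. by apply: canon_eq; apply: qsym; apply: canon_r. Qed.

Record Qt := MkQ { qv : T; _ : canon qv == qv }.
HB.instance Definition _ := [isSub for qv].
HB.instance Definition _ := [Choice of Qt by <:].

Definition pi (x : T) : Qt := @MkQ (canon x) (introT eqP (canonK x)).
Lemma piP x y : pi x = pi y <-> r x y.
Proof.
split.
- move=> h; have := congr1 qv h => /= e.
  apply: qtrans (canon_r x) _; rewrite e; exact: qsym (canon_r y).
- move=> h; apply: val_inj => /=; exact: canon_eq.
Qed.
Lemma qvK q : pi (qv q) = q.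
Proof. case: q => v h; apply: val_inj => /=; exact/eqP. Qed.
Lemma quot_ind (P : Qt -> Prop) : (forall x, P (pi x)) -> forall q, P q.
Proof. by move=> h q; rewrite -(qvK q). Qed.
Lemma qv_pi x : r (qv (pi x)) x.
Proof. exact: qsym (canon_r x). Qed.

Definition qzero := pi (qz D).
Definition qadd a b := pi (qad D (qv a) (qv b)).
Definition qopp a := pi (qop D (qv a)).
Lemma pi_add x y : pi (qad D x y) = qadd (pi x) (pi y).
Proof. apply/piP; apply: qad_c; apply: qsym; apply: qv_pi. Qed.
Lemma pi_opp x : pi (qop D x) = qopp (pi x).
Proof. apply/piP; apply: qop_c; apply: qsym; apply: qv_pi. Qed.

Lemma qaddrA : associative qadd.
Proof.
elim/quot_ind=> x; elim/quot_ind=> y; elim/quot_ind=> w.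
by rewrite -!pi_add; apply/piP; apply: qaddA.
Qed.
Lemma qaddrC : commutative qadd.
Proof. elim/quot_ind=> x; elim/quot_ind=> y; rewrite -!pi_add; apply/piP; apply: qaddC. Qed.
Lemma qadd0r : left_id qzero qadd.
Proof. elim/quot_ind=> x; rewrite /qzero -!pi_add; apply/piP; apply: qadd0. Qed.
Lemma qaddNr : left_inverse qzero qopp qadd.
Proof. elim/quot_ind=> x; rewrite /qzero -pi_opp -!pi_add; apply/piP; apply: qaddN. Qed.
HB.instance Definition _ := GRing.isZmodule.Build Qt qaddrA qaddrC qadd0r qaddNr.

Definition qone := pi (qo D).
Definition qmul a b := pi (qmu D (qv a) (qv b)).
Lemma pi_mul x y : pi (qmu D x y) = qmul (pi x) (pi y).
Proof. apply/piP; apply: qmu_c; apply: qsym; apply: qv_pi. Qed.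
Lemma pi_addE x y : pi (qad D x y) = pi x + pi y.
Proof. exact: pi_add. Qed.
Lemma pi_zeroE : pi (qz D) = 0.
Proof. by []. Qed.
Lemma qmulrA : associative qmul.
Proof. elim/quot_ind=> x; elim/quot_ind=> y; elim/quot_ind=> w; rewrite -!pi_mul; apply/piP; apply: qmulA. Qed.
Lemma qmul1r : left_id qone qmul.
Proof. elim/quot_ind=> x; rewrite /qone -!pi_mul; apply/piP; apply: qmul1L. Qed.
Lemma qmulr1 : right_id qone qmul.
Proof. elim/quot_ind=> x; rewrite /qone -!pi_mul; apply/piP; apply: qmul1R. Qed.
Lemma qmulrDl : left_distributive qmul +%R.
Proof. elim/quot_ind=> x; elim/quot_ind=> y; elim/quot_ind=> w; rewrite -[pi x + pi y]pi_addE -!pi_mul -pi_addE; apply/piP; apply: qmulDl. Qed.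
Lemma qmulrDr : right_distributive qmul +%R.
Proof. elim/quot_ind=> x; elim/quot_ind=> y; elim/quot_ind=> w; rewrite -[pi y + pi w]pi_addE -!pi_mul -pi_addE; apply/piP; apply: qmulDr. Qed.
Lemma qone_neq0 : qone != 0.
Proof. apply/eqP; rewrite -pi_zeroE /qone => /piP; exact: qone_nz. Qed.
HB.instance Definition _ := GRing.Zmodule_isNzRing.Build Qt qmulrA qmul1r qmulr1 qmulrDl qmulrDr qone_neq0.

Definition qscale k a := pi (qsc D k (qv a)).
Lemma pi_sc k x : pi (qsc D k x) = qscale k (pi x).
Proof. apply/piP; apply: qsc_c; apply: qsym; apply: qv_pi. Qed.
Lemma pi_mulE x y : pi (qmu D x y) = pi x * pi y.
Proof. exact: pi_mul. Qed.
Lemma qscalerA a b v : qscale a (qscale b v) = qscale (a * b) v.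
Proof. elim/quot_ind: v => v; rewrite -!pi_sc; apply/piP; apply: qscA. Qed.
Lemma qscale1r : left_id 1 qscale.
Proof. elim/quot_ind=> v; rewrite -!pi_sc; apply/piP; apply: qsc1. Qed.
Lemma qscalerDr : right_distributive qscale +%R.
Proof. move=> a; elim/quot_ind=> x; elim/quot_ind=> y; rewrite -[pi x + pi y]pi_addE -!pi_sc -pi_addE; apply/piP; apply: qscDr. Qed.
Lemma qscalerDl v : {morph qscale^~ v: a b / a + b}.
Proof. elim/quot_ind: v => v a b; rewrite -!pi_sc -pi_addE; apply/piP; apply: qscDl. Qed.
HB.instance Definition _ := GRing.Zmodule_isLmodule.Build F Qt qscalerA qscale1r qscalerDr qscalerDl.
Lemma pi_scE k x : pi (qsc D k x) = k *: pi x.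
Proof. exact: pi_sc. Qed.
Lemma qscalerAl (a : F) (u v : Qt) : a *: (u * v) = (a *: u) * v.
Proof. elim/quot_ind: u => u; elim/quot_ind: v => v; rewrite -[pi u * pi v]pi_mulE -!pi_scE -pi_mulE; apply/piP; apply: qscAl. Qed.
HB.instance Definition _ := GRing.Lmodule_isLalgebra.Build F Qt qscalerAl.
Lemma qscalerAr (a : F) (u v : Qt) : a *: (u * v) = u * (a *: v).
Proof. elim/quot_ind: u => u; elim/quot_ind: v => v; rewrite -[pi u * pi v]pi_mulE -!pi_scE -pi_mulE; apply/piP; apply: qscAr. Qed.
HB.instance Definition _ := GRing.Lalgebra_isAlgebra.Build F Qt qscalerAr.
Lemma pi_oneE : pi (qo D) = 1.
Proof. by []. Qed.
Lemma pi_oppE x : pi (qop D x) = - pi x.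
Proof. exact: pi_opp. Qed.
End Quot.

HB.lock Definition lc4 (M : zmodType) (a b c d : M) (u v w t : int) := a *~ u + b *~ v + c *~ w + d *~ t.
Lemma lc4D (M : zmodType) (a b c d : M) u v w t u' v' w' t' :
  lc4 a b c d u v w t + lc4 a b c d u' v' w' t' = lc4 a b c d (u + u') (v + v') (w + w') (t + t').
Proof. rewrite lc4.unlock !mulrzDr addrACA; congr (_ + _); rewrite addrACA; congr (_ + _); exact: addrACA. Qed.
Lemma lc4N (M : zmodType) (a b c d : M) u v w t : - lc4 a b c d u v w t = lc4 a b c d (- u) (- v) (- w) (- t).
Proof. by rewrite lc4.unlock !mulrNz !opprD. Qed.
Lemma lc4Z (M : zmodType) (a b c d : M) u v w t k : (lc4 a b c d u v w t) *~ k = lc4 a b c d (u * k) (v * k) (w * k) (t * k).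
Proof. by rewrite lc4.unlock !mulrzDl -!mulrzA. Qed.
Lemma lc4_1 (M : zmodType) (a b c d : M) : a = lc4 a b c d 1 0 0 0.
Proof. by rewrite lc4.unlock !mulr0z !addr0. Qed.
Lemma lc4_2 (M : zmodType) (a b c d : M) : b = lc4 a b c d 0 1 0 0.
Proof. by rewrite lc4.unlock !mulr0z add0r !addr0. Qed.
Lemma lc4_3 (M : zmodType) (a b c d : M) : c = lc4 a b c d 0 0 1 0.
Proof. by rewrite lc4.unlock !mulr0z !add0r addr0. Qed.
Lemma lc4_4 (M : zmodType) (a b c d : M) : d = lc4 a b c d 0 0 0 1.
Proof. by rewrite lc4.unlock !mulr0z !add0r. Qed.
Lemma lc4_0 (M : zmodType) (a b c d : M) : 0 = lc4 a b c d 0 0 0 0.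
Proof. by rewrite lc4.unlock !mulr0z !addr0. Qed.
Lemma lc4_eq (M : zmodType) (a b c d : M) u v w t u' v' w' t' :
  u = u' -> v = v' -> w = w' -> t = t' -> lc4 a b c d u v w t = lc4 a b c d u' v' w' t'.
Proof. by move=> -> -> -> ->. Qed.

Ltac linfin a b c d f :=
  repeat progress rewrite ?lc4Z ?lc4N ?lc4D;
  rewrite /f; try (match goal with |- _ = 0 => rewrite [RHS](lc4_0 a b c d) end); apply: lc4_eq.

Ltac lin4G a b c d :=
  let f := fresh "f" in
  pose f := lc4 a b c d;
  let ea := fresh in let eb := fresh in let ec := fresh in let ed := fresh in
  have ea : a = f 1 0 0 0 := lc4_1 a b c d;
  have eb : b = f 0 1 0 0 := lc4_2 a b c d;
  have ec : c = f 0 0 1 0 := lc4_3 a b c d;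
  have ed : d = f 0 0 0 1 := lc4_4 a b c d;
  rewrite ?[a]ea ?[b]eb ?[c]ec ?[d]ed; clear ea eb ec ed; linfin a b c d f.
Ltac lin3G a b c :=
  let T := type of a in let z := constr:(0 : T) in
  let f := fresh "f" in
  pose f := lc4 a b c z;
  let ea := fresh in let eb := fresh in let ec := fresh in
  have ea : a = f 1 0 0 0 := lc4_1 a b c z;
  have eb : b = f 0 1 0 0 := lc4_2 a b c z;
  have ec : c = f 0 0 1 0 := lc4_3 a b c z;
  rewrite ?[a]ea ?[b]eb ?[c]ec; clear ea eb ec; linfin a b c z f.
Ltac lin2G a b :=
  let T := type of a in let z := constr:(0 : T) in
  let f := fresh "f" in
  pose f := lc4 a b z z;
  let ea := fresh in let eb := fresh in
  have ea : a = f 1 0 0 0 := lc4_1 a b z z;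
  have eb : b = f 0 1 0 0 := lc4_2 a b z z;
  rewrite ?[a]ea ?[b]eb; clear ea eb; linfin a b z z f.
Ltac lin1G a :=
  let T := type of a in let z := constr:(0 : T) in
  let f := fresh "f" in
  pose f := lc4 a z z z;
  let ea := fresh in
  have ea : a = f 1 0 0 0 := lc4_1 a z z z;
  rewrite ?[a]ea; clear ea; linfin a z z z f.
Ltac lin4 a b c d := lin4G a b c d; ring.
Ltac lin3 a b c := lin3G a b c; ring.
Ltac lin2 a b := lin2G a b; ring.
Ltac lin1 a := lin1G a; ring.

Section CaseA.
Variable R : pzRingType.
Definition tors (c : R) := exists k : nat, c *+ k.+1 = 0.
Lemma tors0 : tors 0. Proof. by exists 0%N; rewrite mul0rn. Qed.
Lemma torsD a b : tors a -> tors b -> tors (a + b).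
Proof.
move=> [k ha] [l hb]; exists (k.+1 * l.+1).-1.
rewrite prednK ?muln_gt0 // mulrnDl.
by rewrite mulrnA ha mul0rn mulnC mulrnA hb mul0rn addr0.
Qed.
Lemma torsN a : tors a -> tors (- a).
Proof. by move=> [k h]; exists k; rewrite mulNrn h oppr0. Qed.
Lemma torsB a b : tors a -> tors b -> tors (a - b).
Proof. by move=> ha hb; apply: torsD => //; apply: torsN. Qed.
Lemma torsZ a (i : int) : tors a -> tors (a *~ i).
Proof. move=> [k h]; exists k; by rewrite -mulrz_nat -mulrzA mulrC mulrzA mulrz_nat h mul0rz. Qed.
Lemma torsMl a b : tors a -> tors (b * a).
Proof. by move=> [k h]; exists k; rewrite -mulrnAr h mulr0. Qed.
Lemma torsMr a b : tors a -> tors (a * b).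
Proof. by move=> [k h]; exists k; rewrite -mulrnAl h mul0r. Qed.
Lemma tors_div a n : tors (a *~ Posz n.+1) -> tors a.
Proof. move=> [k h]; exists (n.+1 * k.+1).-1; by rewrite prednK ?muln_gt0 // mulrnA. Qed.

Definition dS (n m : nat) := (n.+1 * m.+1).-1.
Lemma dSz n m : Posz (dS n m).+1 = Posz n.+1 * Posz m.+1.
Proof. by rewrite /dS prednK ?muln_gt0. Qed.

Definition rA (x y : R * nat) := tors (x.1 *~ Posz y.2.+1 - y.1 *~ Posz x.2.+1).
Lemma rA_eq x y : x.1 *~ Posz y.2.+1 = y.1 *~ Posz x.2.+1 -> rA x y.
Proof. by rewrite /rA => ->; rewrite subrr; apply: tors0. Qed.
Lemma rA_refl x : rA x x. Proof. exact: rA_eq. Qed.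
Lemma rA_sym x y : rA x y -> rA y x.
Proof. by rewrite /rA => /torsN; rewrite opprB. Qed.
Lemma rA_trans x y w : rA x y -> rA y w -> rA x w.
Proof.
case: x => a n; case: y => b m; case: w => c l; rewrite /rA /= => h1 h2.
apply: (@tors_div _ m).
have -> : (a *~ Posz l.+1 - c *~ Posz n.+1) *~ Posz m.+1 =
   (a *~ Posz m.+1 - b *~ Posz n.+1) *~ Posz l.+1 + (b *~ Posz l.+1 - c *~ Posz m.+1) *~ Posz n.+1.
  lin3 a b c.
by apply: torsD; apply: torsZ.
Qed.

Lemma rA_eq' a n b m : a *~ Posz m.+1 = b *~ Posz n.+1 -> rA (a, n) (b, m).
Proof. by rewrite /rA /= => ->; rewrite subrr; apply: tors0. Qed.

Definition adA (x y : R * nat) := (x.1 *~ Posz y.2.+1 + y.1 *~ Posz x.2.+1, dS x.2 y.2).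
Definition opA (x : R * nat) := (- x.1, x.2).
Definition muA (x y : R * nat) := (x.1 * y.1, dS x.2 y.2).
Definition dq (q : rat) := (`|denq q|).-1.
Lemma dqz q : Posz (dq q).+1 = denq q.
Proof. by case: (denqP q) => d e; rewrite /dq e. Qed.
Definition scA (q : rat) (x : R * nat) := (x.1 *~ numq q, dS x.2 (dq q)).

Lemma adA_c x x' y y' : rA x x' -> rA y y' -> rA (adA x y) (adA x' y').
Proof.
case: x => a n; case: x' => a' n'; case: y => b m; case: y' => b' m'.
rewrite /rA /adA /= !dSz => h1 h2.
have -> : (a *~ Posz m.+1 + b *~ Posz n.+1) *~ (Posz n'.+1 * Posz m'.+1) -
   (a' *~ Posz m'.+1 + b' *~ Posz n'.+1) *~ (Posz n.+1 * Posz m.+1) =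
   (a *~ Posz n'.+1 - a' *~ Posz n.+1) *~ (Posz m.+1 * Posz m'.+1) +
   (b *~ Posz m'.+1 - b' *~ Posz m.+1) *~ (Posz n.+1 * Posz n'.+1).
  lin4 a a' b b'.
by apply: torsD; apply: torsZ.
Qed.
Lemma opA_c x x' : rA x x' -> rA (opA x) (opA x').
Proof.
case: x => a n; case: x' => a' n'; rewrite /rA /opA /= => h.
have -> : - a *~ Posz n'.+1 - - a' *~ Posz n.+1 = - (a *~ Posz n'.+1 - a' *~ Posz n.+1).
  lin2 a a'.
exact: torsN.
Qed.
Lemma muA_c x x' y y' : rA x x' -> rA y y' -> rA (muA x y) (muA x' y').
Proof.
case: x => a n; case: x' => a' n'; case: y => b m; case: y' => b' m'.
rewrite /rA /muA /= !dSz => h1 h2.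
have -> : a * b *~ (Posz n'.+1 * Posz m'.+1) - a' * b' *~ (Posz n.+1 * Posz m.+1) =
   ((a *~ Posz n'.+1 - a' *~ Posz n.+1) * b) *~ Posz m'.+1 +
   (a' * (b *~ Posz m'.+1 - b' *~ Posz m.+1)) *~ Posz n.+1.
  rewrite mulrBl mulrBr !mulrzAl !mulrzAr.
  lin3 (a * b) (a' * b) (a' * b').
by apply: torsD; apply: torsZ; [apply: torsMr | apply: torsMl].
Qed.
Lemma scA_c k x x' : rA x x' -> rA (scA k x) (scA k x').
Proof.
case: x => a n; case: x' => a' n'.
rewrite /rA /scA /= !dSz => h.
have -> : a *~ numq k *~ (Posz n'.+1 * Posz (dq k).+1) - a' *~ numq k *~ (Posz n.+1 * Posz (dq k).+1) =
   (a *~ Posz n'.+1 - a' *~ Posz n.+1) *~ (numq k * Posz (dq k).+1).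
  lin2 a a'.
exact: torsZ.
Qed.

Lemma adA_A x y w : rA (adA x (adA y w)) (adA (adA x y) w).
Proof. case: x => a n; case: y => b m; case: w => c l; apply: rA_eq'; rewrite /adA /muA /scA /opA /= !dSz; lin3 a b c. Qed.
Lemma adA_C x y : rA (adA x y) (adA y x).
Proof. case: x => a n; case: y => b m; apply: rA_eq'; rewrite /adA /muA /scA /opA /= !dSz; lin2 a b. Qed.
Lemma adA_0 x : rA (adA (0, 0%N) x) x.
Proof. case: x => a n; apply: rA_eq'; rewrite /adA /muA /scA /opA /= !dSz /= mul0rz add0r; lin1 a. Qed.
Lemma adA_N x : rA (adA (opA x) x) (0, 0%N).
Proof. case: x => a n; apply: rA_eq'; rewrite /adA /muA /scA /opA /= !dSz /= mul0rz; lin1 a. Qed.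
Lemma muA_A x y w : rA (muA x (muA y w)) (muA (muA x y) w).
Proof. case: x => a n; case: y => b m; case: w => c l; apply: rA_eq'; rewrite /adA /muA /scA /opA /= !dSz /= mulrA; lin1 (a * b * c). Qed.
Lemma muA_1l x : rA (muA (1, 0%N) x) x.
Proof. case: x => a n; apply: rA_eq'; rewrite /adA /muA /scA /opA /= !dSz /= mul1r; lin1 a. Qed.
Lemma muA_1r x : rA (muA x (1, 0%N)) x.
Proof. case: x => a n; apply: rA_eq'; rewrite /adA /muA /scA /opA /= !dSz /= mulr1; lin1 a. Qed.
Lemma muA_Dl x y w : rA (muA (adA x y) w) (adA (muA x w) (muA y w)).
Proof. case: x => a n; case: y => b m; case: w => c l; apply: rA_eq'; rewrite /adA /muA /scA /opA /= !dSz /= mulrDl !mulrzAl; lin2 (a * c) (b * c). Qed.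
Lemma muA_Dr x y w : rA (muA w (adA x y)) (adA (muA w x) (muA w y)).
Proof. case: x => a n; case: y => b m; case: w => c l; apply: rA_eq'; rewrite /adA /muA /scA /opA /= !dSz /= mulrDr !mulrzAr; lin2 (c * a) (c * b). Qed.

Lemma keyM (x y : rat) : numq (x * y) * (denq x * denq y) = numq x * numq y * denq (x * y).
Proof.
apply: (@intr_inj rat); rewrite !intrM !numqE; ring.
Qed.
Lemma keyD (x y : rat) : numq (x + y) * (denq x * denq y) = (numq x * denq y + numq y * denq x) * denq (x + y).
Proof.
apply: (@intr_inj rat); rewrite !intrM !intrD !intrM !numqE.
move: ((denq x)%:~R : rat) ((denq y)%:~R : rat) ((denq (x + y))%:~R : rat) => dx dy dxy; ring.
Qed.

Lemma scA_A a b v : rA (scA a (scA b v)) (scA (a * b) v).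
Proof.
case: v => w n; apply: rA_eq'; rewrite /adA /muA /scA /opA /= !dSz !dqz; lin1G w; [|ring|ring|ring].
have K := keyM a b; move: K.
move: (numq (a * b)) (denq (a * b)) (numq a) (numq b) (denq a) (denq b) (Posz n.+1) => nab dab na nb da db N K.
transitivity (N * (na * nb * dab)); first ring.
rewrite -K; ring.
Qed.
Lemma scA_1 v : rA (scA 1 v) v.
Proof.
case: v => w n; apply: rA_eq'; rewrite /adA /muA /scA /opA /= !dSz !dqz.
have -> : numq 1 = 1 by []. have -> : denq 1 = 1 by [].
lin1 w. Qed.
Lemma scA_Dr a u v : rA (scA a (adA u v)) (adA (scA a u) (scA a v)).
Proof. case: u => x n; case: v => y m; apply: rA_eq'; rewrite /adA /muA /scA /opA /= !dSz !dqz; lin2 x y. Qed.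
Lemma scA_Dl a b v : rA (scA (a + b) v) (adA (scA a v) (scA b v)).
Proof.
case: v => w n; apply: rA_eq'; rewrite /adA /muA /scA /opA /= !dSz !dqz; lin1G w; [|ring|ring|ring].
have K := keyD a b; move: K.
move: (numq (a + b)) (denq (a + b)) (numq a) (numq b) (denq a) (denq b) (Posz n.+1) => nab dab na nb da db N K.
transitivity (N * N * (nab * (da * db))); first ring.
rewrite K; ring.
Qed.
Lemma scA_Al a u v : rA (scA a (muA u v)) (muA (scA a u) v).
Proof. case: u => x n; case: v => y m; apply: rA_eq'; rewrite /adA /muA /scA /opA /= !dSz !dqz mulrzAl; lin1 (x * y). Qed.
Lemma scA_Ar a u v : rA (scA a (muA u v)) (muA u (scA a v)).
Proof. case: u => x n; case: v => y m; apply: rA_eq'; rewrite /adA /muA /scA /opA /= !dSz !dqz mulrzAr; lin1 (x * y). Qed.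

Hypothesis ntors1 : ~ tors 1.
Lemma oneA_nz : ~ rA (1, 0%N) (0, 0%N).
Proof. by rewrite /rA /= mul0rz subr0. Qed.
End CaseA.

Section CaseB.
Variables (R : pzRingType) (p : nat).
Hypothesis pp : prime p.
Definition Qp (a : R) := exists n b, ~~ (p %| n)%N /\ a *+ n = b *+ p.
Lemma ndvd1 : ~~ (p %| 1)%N.
Proof. by rewrite dvdn1; apply/negP => /eqP e; move: pp; rewrite e. Qed.
Lemma Qp_p b : Qp (b *+ p). Proof. by exists 1%N, b; split; [exact: ndvd1 | rewrite mulr1n]. Qed.
Lemma Qp0 : Qp 0. Proof. by have := Qp_p 0; rewrite mul0rn. Qed.
Lemma QpD a c : Qp a -> Qp c -> Qp (a + c).
Proof.
move=> [n1 [b1 [h1 e1]]] [n2 [b2 [h2 e2]]]; exists (n1 * n2)%N, (b1 *+ n2 + b2 *+ n1); split.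
  by rewrite Euclid_dvdM // negb_or h1 h2.
by rewrite mulrnDl mulrnA e1 mulnC mulrnA e2 mulrnDl -!mulrnA mulnC [(n1 * p)%N]mulnC.
Qed.
Lemma QpN a : Qp a -> Qp (- a).
Proof. by move=> [n [b [h e]]]; exists n, (- b); split => //; rewrite !mulNrn e. Qed.
Lemma QpB a c : Qp a -> Qp c -> Qp (a - c).
Proof. by move=> ha hc; apply: QpD => //; apply: QpN. Qed.
Lemma QpMl a c : Qp a -> Qp (c * a).
Proof. by move=> [n [b [h e]]]; exists n, (c * b); split => //; rewrite -!mulrnAr e. Qed.
Lemma QpMr a c : Qp a -> Qp (a * c).
Proof. by move=> [n [b [h e]]]; exists n, (b * c); split => //; rewrite -!mulrnAl e. Qed.
Lemma QpMn a k : Qp a -> Qp (a *+ k).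
Proof. by move=> [n [b [h e]]]; exists n, (b *+ k); split => //; rewrite -!mulrnA mulnC mulrnA e -mulrnA mulnC mulrnA. Qed.
Lemma Qp_mod v m : Qp (v *+ m - v *+ (m %% p)).
Proof.
rewrite {1}(divn_eq m p) mulrnDr addrK mulrnA; exact: Qp_p.
Qed.

Definition rB (x y : R) := Qp (x - y).
Lemma rB_eq x y : x = y -> rB x y. Proof. by move=> ->; rewrite /rB subrr; exact: Qp0. Qed.
Lemma rB_sym x y : rB x y -> rB y x. Proof. by rewrite /rB => /QpN; rewrite opprB. Qed.
Lemma rB_trans x y w : rB x y -> rB y w -> rB x w.
Proof. by rewrite /rB => h1 h2; have := QpD h1 h2; rewrite addrA subrK. Qed.
Lemma adB_c x x' y y' : rB x x' -> rB y y' -> rB (x + y) (x' + y').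
Proof. by rewrite /rB => h1 h2; rewrite opprD addrACA; apply: QpD. Qed.
Lemma opB_c x x' : rB x x' -> rB (- x) (- x').
Proof. by rewrite /rB => h; rewrite -opprD; apply: QpN. Qed.
Lemma muB_c x x' y y' : rB x x' -> rB y y' -> rB (x * y) (x' * y').
Proof.
rewrite /rB => h1 h2.
have -> : x * y - x' * y' = (x - x') * y + x' * (y - y') by rewrite mulrBl mulrBr addrA subrK.
by apply: QpD; [apply: QpMr | apply: QpMl].
Qed.
Definition scB (c : 'F_p) (x : R) := x *+ (nat_of_ord c).
Lemma scB_c k x x' : rB x x' -> rB (scB k x) (scB k x').
Proof. by rewrite /rB /scB => h; rewrite -mulrnBl; apply: QpMn. Qed.
Lemma valFpM (a b : 'F_p) : nat_of_ord (a * b) = ((a * b) %% p)%N.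
Proof. exact: (congr1 (fun N => ((a * b) %% N)%N) (Fp_cast pp)). Qed.
Lemma valFpD (a b : 'F_p) : nat_of_ord (a + b) = ((a + b) %% p)%N.
Proof. exact: (congr1 (fun N => ((a + b) %% N)%N) (Fp_cast pp)). Qed.
Lemma valFp1 : nat_of_ord (1 : 'F_p) = 1%N.
Proof.
have -> : nat_of_ord (1 : 'F_p) = (1 %% p)%N by exact: (congr1 (fun N => (1 %% N)%N) (Fp_cast pp)).
by rewrite modn_small // prime_gt1.
Qed.
Lemma scB_A a b v : rB (scB a (scB b v)) (scB (a * b) v).
Proof. by rewrite /rB /scB valFpM -mulrnA mulnC; apply: Qp_mod. Qed.
Lemma scB_1 v : rB (scB 1 v) v.
Proof. by apply: rB_eq; rewrite /scB valFp1. Qed.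
Lemma scB_Dr a u v : rB (scB a (u + v)) (scB a u + scB a v).
Proof. by apply: rB_eq; rewrite /scB mulrnDl. Qed.
Lemma scB_Dl a b v : rB (scB (a + b) v) (scB a v + scB b v).
Proof. by apply: rB_sym; rewrite /rB /scB valFpD -mulrnDr; apply: Qp_mod. Qed.
Lemma scB_Al a u v : rB (scB a (u * v)) (scB a u * v).
Proof. by apply: rB_eq; rewrite /scB mulrnAl. Qed.
Lemma scB_Ar a u v : rB (scB a (u * v)) (u * scB a v).
Proof. by apply: rB_eq; rewrite /scB mulrnAr. Qed.
End CaseB.

Section NT.
Variable R : pzRingType.
Lemma torsion_shift (z : R) k M i : z ^+ k *+ M = 0 -> (k <= i)%N -> z ^+ i *+ M = 0.
Proof. by move=> h /subnKC <-; rewrite exprD -mulrnAl h mul0r. Qed.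

Lemma caseB_prime (z : R) : ~ nilpotent_elt z ->
  forall m k, z ^+ k *+ m.+1 = 0 -> exists p, prime p /\ forall j, ~ Qp p (z ^+ j).
Proof.
move=> nz m; elim/ltn_ind: m => m IH k hk.
have [m0 | mn0] := eqVneq m 0%N.
  by subst; exfalso; apply: nz; exists k; rewrite -[z ^+ k]mulr1n.
set M := m.+1 in hk.
have M1 : (1 < M)%N by rewrite /M ltnS lt0n.
have pp : prime (pdiv M) := pdiv_prime M1.
set p := pdiv M in pp.
have pM : (p %| M)%N := pdiv_dvd M.
case: (classic (forall j, ~ Qp p (z ^+ j))) => [H|H]; first by exists p.
move: H => /not_all_ex_not [j /NNPP hj].
set j' := (j + k.+1)%N.
have hj' : Qp p (z ^+ j') by rewrite /j' exprD; apply: QpMr.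
case: hj' => n [b [hn e]].
have j'pos : (0 < j')%N by rewrite /j' addnS.
set w := z ^+ j' *+ n.
have wk : w ^+ k *+ M = 0.
  rewrite /w exprMn_n -exprM -mulrnA [(n ^ k * M)%N]mulnC mulrnA.
  rewrite (torsion_shift hk) ?mul0rn //; exact: leq_pmull.
set M1' := (M %/ p)%N.
have eM : M = (p * M1')%N by rewrite /M1' mulnC divnK.
have wk1 : w ^+ k.+1 *+ M1' = 0.
  have ew : w = b *+ p by rewrite /w e.
  by rewrite exprSr {2}ew mulrnAr -mulrnA -eM -mulrnAl wk mul0r.
set K := (j' * k.+1)%N.
set N := (n ^ k.+1)%N.
have h1 : z ^+ K *+ (N * M1') = 0.
  by move: wk1; rewrite /w exprMn_n -exprM mulrnA.
have h2 : z ^+ K *+ (p * M1') = 0.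
  rewrite -eM (torsion_shift hk) //; apply: leq_trans (leqnSn k) _; exact: leq_pmull.
have Npos : (0 < N)%N.
  rewrite /N expn_gt0; apply/orP; left; rewrite lt0n; apply/eqP => n0.
  by move: hn; rewrite n0 dvdn0.
have cop : coprime N p.
  by rewrite /N coprimeXl // coprime_sym prime_coprime.
have h3 : z ^+ K *+ M1' = 0.
  case: (egcdnP p Npos) => km kn e1 _.
  move: cop; rewrite /coprime => /eqP g1; rewrite g1 in e1.
  have := congr1 (fun t => z ^+ K *+ (t * M1')) e1 => /=.
  rewrite mulnDl mul1n mulrnDr -[(km * N * M1')%N]mulnA [(km * _)%N]mulnC [z ^+ K *+ (_ * km)]mulrnA h1 mul0rn.
  by rewrite -[(kn * p * M1')%N]mulnA [(kn * _)%N]mulnC [z ^+ K *+ (_ * kn)]mulrnA h2 mul0rn add0r => <-.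
have M1pos : (0 < M1')%N by rewrite /M1' divn_gt0 ?pdiv_gt0 // dvdn_leq.
have M1lt : (M1' < M)%N by rewrite /M1' ltn_Pdiv // prime_gt1.
have [m1 em1] : exists m1, M1' = m1.+1 by exists M1'.-1; rewrite prednK.
rewrite em1 in h3 M1lt.
exact: (IH m1 _ K h3).
Qed.
End NT.

Lemma final_step (F : pzRingType) (B : algType F) (I J : B -> Prop) x y :
  right_ideal I -> right_ideal J -> nil_set I -> nil_set J -> I x -> J y ->
  ~ nilpotent_elt (x + y) -> exists A : algType F, countably_generated A /\ NK A.
Proof.
move=> hI hJ nI nJ Ix Jy nz; exists (SA x y); split.
  exact: SA_cg.
exact: (SA_NK hI hJ nI nJ Ix Jy nz).
Qed.

Definition DB (R : pzRingType) (p : nat) (pp : prime p) (h : ~ Qp p (1 : R)) : QData 'F_p R.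
refine (@Build_QData _ _ (@rB R p) 0 1 +%R (fun x => - x) *%R (@scB R p) _ _ _ _ _ _ _ _ _ _ _ _ _ _ _ _ _ _ _ _ _ _ _).
- by move=> x; apply: (rB_eq pp).
- exact: rB_sym.
- exact: rB_trans.
- exact: adB_c.
- exact: opB_c.
- exact: muB_c.
- exact: scB_c.
- by move=> *; apply: (rB_eq pp); rewrite addrA.
- by move=> *; apply: (rB_eq pp); rewrite addrC.
- by move=> *; apply: (rB_eq pp); rewrite add0r.
- by move=> *; apply: (rB_eq pp); rewrite addNr.
- by move=> *; apply: (rB_eq pp); rewrite mulrA.
- by move=> *; apply: (rB_eq pp); rewrite mul1r.
- by move=> *; apply: (rB_eq pp); rewrite mulr1.
- by move=> *; apply: (rB_eq pp); rewrite mulrDl.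
- by move=> *; apply: (rB_eq pp); rewrite mulrDr.
- by rewrite /rB subr0.
- exact: scB_A.
- exact: scB_1.
- exact: scB_Dr.
- exact: scB_Dl.
- exact: scB_Al.
- exact: scB_Ar.
Defined.

Definition DA (R : pzRingType) (h : ~ tors (1 : R)) : QData rat (R * nat)%type.
refine (@Build_QData _ _ (@rA R) (0, 0%N) (1, 0%N) (@adA R) (@opA R) (@muA R) (@scA R) _ _ _ _ _ _ _ _ _ _ _ _ _ _ _ _ _ _ _ _ _ _ _).
- exact: rA_refl.
- exact: rA_sym.
- exact: rA_trans.
- exact: adA_c.
- exact: opA_c.
- exact: muA_c.
- exact: scA_c.
- exact: adA_A.
- exact: adA_C.
- exact: adA_0.
- exact: adA_N.
- exact: muA_A.
- exact: muA_1l.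
- exact: muA_1r.
- exact: muA_Dl.
- exact: muA_Dr.
- exact: oneA_nz.
- exact: scA_A.
- exact: scA_1.
- exact: scA_Dr.
- exact: scA_Dl.
- exact: scA_Al.
- exact: scA_Ar.
Defined.

Lemma ideal_add (R : pzRingType) (I : R -> Prop) a b : right_ideal I -> I a -> I b -> I (a + b).
Proof.
case=> I0 IB _ ha hb.
have hn : I (- b) by rewrite -sub0r; apply: IB.
by rewrite -(opprK b); apply: IB.
Qed.
Lemma ideal_z (R : pzRingType) (I : R -> Prop) a (k : int) : right_ideal I -> I a -> I (a *~ k).
Proof. by case=> _ _ IM ha; rewrite -mulrzr; apply: IM. Qed.

Theorem mainTheorem7 :
  (exists R : pzRingType, NK R) <->
  ((exists A : algType rat, countably_generated A /\ NK A) \/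
   (exists p : nat, prime p /\
      exists A : algType 'F_p, countably_generated A /\ NK A)).
Proof.
split; last first.
  case=> [[A [_ hA]] | [p [_ [A [_ hA]]]]].
  - by exists A.
  - by exists A.
move=> [R [I [J [hI hJ nI nJ hnn]]]].
have [w [[x [y [Ix Jy ew]]] nw]] : exists w, (exists x y, [/\ I x, J y & w = x + y]) /\ ~ nilpotent_elt w.
  apply: NNPP => H; apply: hnn => w hw; apply: NNPP => nw; apply: H; by exists w.
case: (classic (exists k n, w ^+ k *+ n.+1 = 0)) => [[k [n hk]] | ht].
-
  have [p [pp hQ]] := caseB_prime nw hk.
  right; exists p; split => //.
  have h1 : ~ Qp p (1 : R) by move: (hQ 0%N); rewrite expr0.
  pose D := DB pp h1.
  have pexp : forall (a : R) m, (pi D a) ^+ m = pi D (a ^+ m).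
    move=> a; elim=> [|m IH]; first by rewrite !expr0.
    by rewrite !exprS IH -pi_mulE.
  have rid : forall K : R -> Prop, right_ideal K -> right_ideal (fun b => exists i, K i /\ b = pi D i).
    move=> K hK; split.
    + by exists 0; split; [case: hK | ].
    + move=> _ _ [i [Ki ->]] [j [Kj ->]]; exists (i - j); split.
        by case: hK => _ h _; apply: h.
      by rewrite -pi_oppE -pi_addE.
    + move=> _ r [i [Ki ->]]; exists (i * qv r); split.
        by case: hK => _ _ h; apply: h.
      by rewrite -{1}(qvK r) -pi_mulE.
  have nil : forall K : R -> Prop, nil_set K -> nil_set (fun b => exists i, K i /\ b = pi D i).
    move=> K nK _ [i [Ki ->]]; have [m hm] := nK i Ki; exists m; by rewrite pexp hm.
  apply: (@final_step _ (Qt D) _ _ (pi D x) (pi D y) (rid _ hI) (rid _ hJ) (nil _ nI) (nil _ nJ)).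
  + by exists x.
  + by exists y.
  + move=> [m hm]; apply: (hQ m).
    have : pi D (w ^+ m) = pi D 0 by rewrite -pexp ew pi_addE.
    by move/piP; rewrite /= /rB subr0.
-
  have ht1 : ~ tors (1 : R) by move=> [n hn]; apply: ht; exists 0%N, n; rewrite expr0.
  left.
  pose D := DA ht1.
  have pexp : forall (a : R) n m, exists d, (pi D (a, n)) ^+ m = pi D (a ^+ m, d).
    move=> a n; elim=> [|m [d IH]]; first by exists 0%N; rewrite !expr0.
    by exists (dS d n); rewrite !exprSr IH -pi_mulE.
  have p0 : forall d, pi D (0, d) = 0.
    by move=> d; apply/piP; apply: rA_eq'; rewrite !mul0rz.
  have rid : forall K : R -> Prop, right_ideal K -> right_ideal (fun b => exists i n, K i /\ b = pi D (i, n)).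
    move=> K hK; split.
    + by exists 0, 0%N; split; [case: hK | ].
    + move=> _ _ [i [n [Ki ->]]] [j [m [Kj ->]]].
      exists (i *~ Posz m.+1 + (- j) *~ Posz n.+1), (dS n m); split.
        apply: ideal_add => //; apply: ideal_z => //.
        by case: hK => K0 KB _; rewrite -sub0r; apply: KB.
      by rewrite -pi_oppE -pi_addE.
    + move=> _ r [i [n [Ki ->]]]; exists (i * (qv r).1), (dS n (qv r).2); split.
        by case: hK => _ _ h; apply: h.
      by rewrite -{1}(qvK r) -pi_mulE; case: (qv r).
  have nil : forall K : R -> Prop, nil_set K -> nil_set (fun b => exists i n, K i /\ b = pi D (i, n)).
    move=> K nK _ [i [n [Ki ->]]]; have [m hm] := nK i Ki; exists m.
    by have [d ->] := pexp i n m; rewrite hm p0.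
  apply: (@final_step _ (Qt D) _ _ (pi D (x, 0%N)) (pi D (y, 0%N)) (rid _ hI) (rid _ hJ) (nil _ nI) (nil _ nJ)).
  + by exists x, 0%N.
  + by exists y, 0%N.
  + move=> [m hm].
    have e : pi D (x, 0%N) + pi D (y, 0%N) = pi D (w, 0%N).
      rewrite -pi_addE; apply/piP; apply: rA_eq'; rewrite ew.
      by rewrite /= /dS /= !mulr1z.
    move: hm; rewrite e; have [d ->] := pexp w 0%N m; rewrite -(p0 0%N) => /piP.
    move=> h; have : rA (w ^+ m, d) (0, 0%N) := h.
    rewrite /rA /= mul0rz subr0 => /tors_div [t ht'].
    by apply: ht; exists m, t.
Qed.
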